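(* Let $d\ge2$, $A\in\mathcal C^{d-1}$, $p\in[1,\infty)$ and $C_1,C_2\in\mathcal C^d_A$. Then: (1) $\Phi_{C_1,C_2;A,p}(0)=\Phi_{C_1,C_2;A,p}(1)=0$; (2) $\Phi_{C_1,C_2;A,p}$ is continuous on $\mathbb I$, and for $p=1$ it is Lipschitz continuous with constant $2$; (3) $\Phi_{C_1,C_2;A,p}(y)\le 2\min\{y,1-y\}$ for all $y\in\mathbb I$, and this bound is sharp (attained for some $C_1,C_2\in\mathcal C^d_A$ at every $y$). Moreover, $\max_{C_1,C_2\in\mathcal C^d_A}D_{A,p}(C_1,C_2)=2^{-1/p}$.
   Context: $\mathbb I=[0,1]$, $\lambda$ Lebesgue measure. A $d$-copula $C\in\mathcal C^d$ is the distribution function on $\mathbb I^d$ of a probability measure $\mu_C$ with uniform univariate marginals; points are $(\mathbf x,y)$, $\mathbf x\in\mathbb I^{d-1}$. $C_{1:(d-1)}$ is the marginal copula of the first $d-1$ coordinates; $\mathcal C^d_A=\{C\in\mathcal C^d:C_{1:(d-1)}=A\}$ (for $d=2$, $\mu_A=\lambda$, $\mathcal C^2_A=\mathcal C^2$). $K_C$ is the Markov kernel of $C$ w.r.t. the first $d-1$ coordinates: $\mu_C(B\times F)=\int_B K_C(\mathbf x,F)\,\mathrm d\mu_{A}(\mathbf x)$ for $C\in\mathcal C^d_A$. For $C_1,C_2\in\mathcal C^d_A$ and $y\in\mathbb I$, $\Phi_{C_1,C_2;A,p}(y)=\int_{\mathbb I^{d-1}}|K_{C_1}(\mathbf x,[0,y])-K_{C_2}(\mathbf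 x,[0,y])|^p\,\mathrm d\mu_A(\mathbf x)$ and $D_{A,p}(C_1,C_2)=\big(\int_{\mathbb I}\Phi_{C_1,C_2;A,p}(y)\,\mathrm d\lambda(y)\big)^{1/p}$. *)

(* Defs.v *)
From HB Require Import structures.
From mathcomp Require Import all_boot all_order all_algebra.
From mathcomp Require Import all_classical all_reals all_analysis.
Set Implicit Arguments. Unset Strict Implicit. Unset Printing Implicit Defensive.
Import Order.TTheory GRing.Theory Num.Theory.
Import numFieldNormedType.Exports.
Local Open Scope classical_set_scope.
Local Open Scope ring_scope.

Definition unif_cdf (R : realType) (t : R) : R := Num.min (Num.max t 0) 1.

(* mu_A for an n-copula A (points of I^n are n-tuples of reals):
   a probability measure on R^n all of whose univariate marginals are
   uniform on [0,1] *)
Definition is_copula_measure (R : realType) (n : nat)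
  (muA : probability (n.-tuple R) R) : Prop :=
  forall (i : 'I_n) (t : R),
    muA [set x | tnth x i <= t] = (unif_cdf t)%:E.

(* mu_C for a copula C on I^(n+1), points written (x, y) with x in I^n *)
Definition is_copula_measure_xy (R : realType) (n : nat)
  (mu : probability (n.-tuple R * R)%type R) : Prop :=
  (forall (i : 'I_n) (t : R),
    mu [set z | tnth z.1 i <= t] = (unif_cdf t)%:E) /\
  (forall t : R, mu [set z | z.2 <= t] = (unif_cdf t)%:E).

(* C in C_A : the marginal on the first n coordinates is mu_A *)
Definition has_marginal (R : realType) (n : nat)
  (muA : probability (n.-tuple R) R)
  (mu : probability (n.-tuple R * R)%type R) : Prop :=
  forall B : set (n.-tuple R), measurable B ->
    mu (B `*` setT) = muA B.

Definition is_markov_kernel_of (R : realType) (n : nat)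
  (muA : probability (n.-tuple R) R)
  (mu : probability (n.-tuple R * R)%type R)
  (K : R.-pker (n.-tuple R) ~> R) : Prop :=
  forall (B : set (n.-tuple R)) (F : set R), measurable B -> measurable F ->
    mu (B `*` F) = (\int[muA]_(x in B) K x F)%E.

Definition Phi (R : realType) (n : nat)
  (muA : probability (n.-tuple R) R)
  (K1 K2 : R.-pker (n.-tuple R) ~> R) (p : R) (y : R) : R :=
  Rintegral muA setT
    (fun x => `| fine (K1 x [set` `[0, y]]) - fine (K2 x [set` `[0, y]]) | `^ p).

Definition Dist (R : realType) (n : nat)
  (muA : probability (n.-tuple R) R)
  (K1 K2 : R.-pker (n.-tuple R) ~> R) (p : R) : R :=
  (Rintegral (@lebesgue_measure R) [set` `[0, 1]] (Phi muA K1 K2 p)) `^ p^-1.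

(* Main.v *)
Require Import Defs.
From HB Require Import structures.
From mathcomp Require Import all_boot all_order all_algebra.
From mathcomp Require Import all_classical all_reals all_analysis.
From mathcomp Require Import lra measurable_realfun.
Set Implicit Arguments. Unset Strict Implicit. Unset Printing Implicit Defensive.
Import Order.TTheory GRing.Theory Num.Theory.
Import numFieldNormedType.Exports.
Local Open Scope classical_set_scope.
Local Open Scope ring_scope.
Section elem.
Context {R : realType}.

Lemma powR_le_id (a p : R) : 0 <= a <= 1 -> 1 <= p -> a `^ p <= a.
Proof.
move=> /andP[a0 a1] p1.
have [->|a0'] := eqVneq a 0; first by rewrite powR0 // gt_eqF // (lt_le_trans _ p1).
by apply: ge1r_powR => //; rewrite a1 andbT lt_neqAle eq_sym a0' a0.
Qed.

Lemma powR_lip_le (a b p : R) : 0 <= b -> b <= a -> a <= 1 -> 1 <= p ->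
  a `^ p - b `^ p <= p * (a - b).
Proof.
move=> b0 ba a1 p1.
have p0 : 0 < p by rewrite (lt_le_trans _ p1).
have [->|b0'] := eqVneq b 0.
  rewrite powR0 ?gt_eqF // subr0 subr0.
  apply: (le_trans (powR_le_id _ p1)); first by rewrite a1 (le_trans b0 ba).
  by rewrite ler_peMl // (le_trans b0 ba).
have bpos : 0 < b by rewrite lt_neqAle eq_sym b0' b0.
have [<-|ba'] := eqVneq b a; first by rewrite !subrr mulr0.
have blta : b < a by rewrite lt_neqAle ba' ba.
have hd : forall x, x \in `]b, a[ -> is_derive x 1 (@powR R ^~ p) (p * x `^ (p - 1)).
  move=> x hx; apply: is_derive1_powR.
  by apply: (lt_trans bpos); move: hx; rewrite in_itv /= => /andP[].
have hc : {within `[b, a], continuous (@powR R ^~ p)}.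
  apply: derivable_within_continuous => x hx.
  apply: derivable_powR; rewrite in_itv /= andbT.
  by apply: (lt_le_trans bpos); move: hx; rewrite in_itv /= => /andP[].
have [c hcin ->] := MVT blta hd hc.
move: hcin; rewrite in_itv /= => /andP[bc ca].
rewrite ler_wpM2r // ?subr_ge0 //.
rewrite ger_pMr //.
apply: (@le_trans _ _ (1 `^ (p - 1))); last by rewrite powR1.
apply: ge0_ler_powR; rewrite ?subr_ge0 // ?nnegrE ?(le_trans b0 (ltW bc)) //.
by rewrite (le_trans (ltW ca)).
Qed.

Lemma powR_lip (a b p : R) : 0 <= a <= 1 -> 0 <= b <= 1 -> 1 <= p ->
  `|a `^ p - b `^ p| <= p * `|a - b|.
Proof.
move=> /andP[a0 a1] /andP[b0 b1] p1.
have [ab|ba] := leP b a.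
  rewrite !ger0_norm ?subr_ge0 //; first exact: powR_lip_le.
  by apply: ge0_ler_powR => //; rewrite (le_trans _ p1).
rewrite distrC [`|a - b|]distrC !ger0_norm ?subr_ge0 ?(ltW ba) //.
  by apply: powR_lip_le => //; exact: ltW.
by apply: ge0_ler_powR => //; rewrite ?(le_trans _ p1) ?(ltW ba).
Qed.
End elem.

Lemma lip_within_cont (R : realType) (f : R -> R) (c : R) : 0 <= c ->
  (forall y1 y2, y1 \in `[0, 1] -> y2 \in `[0, 1] ->
     `|f y1 - f y2| <= c * `|y1 - y2|) ->
  {within `[0, 1], continuous f}.
Proof.
move=> c0 hf; apply/subspace_continuousP => x Ax.
apply/cvgrPdist_lt => e e0.
rewrite /prop_near1 /within /=.
apply/nbhs_ballP; exists (e / (c + 1)) => /=.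
  by rewrite divr_gt0 // ltr_pwDr.
move=> z; rewrite -ball_normE /= => xz Az.
apply: (le_lt_trans (hf _ _ _ _)); [by rewrite inE|by rewrite inE|].
have c1 : 0 < c + 1 by rewrite ltr_pwDr.
apply: (le_lt_trans (y := (c + 1) * `|x - z|)).
  by rewrite ler_wpM2r // lerDl.
by rewrite -ltr_pdivlMl // mulrC.
Qed.

Section ftc.
Context (R : realType).
Notation leb := (@lebesgue_measure R).

Lemma der_cont (F : R -> R) (x df : R) : is_derive x 1 F df -> {for x, continuous F}.
Proof.
move=> h; apply/differentiable_continuous; rewrite -derivable1_diffP.
exact: ex_derive.
Qed.

Lemma ftc_helper (F f : R -> R) (a b : R) : a < b ->
  (forall x : R, is_derive x 1 F (f x)) -> {within `[a, b], continuous f} ->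
  Rintegral leb `[a, b] f = F b - F a.
Proof.
move=> ab dF cf; rewrite /Rintegral (continuous_FTC2 (F := F) ab cf) //.
- split.
  + by move=> x _; exact: ex_derive.
  + by apply: cvg_at_right_filter; exact: (der_cont (dF a)).
  + by apply: cvg_at_left_filter; exact: (der_cont (dF b)).
- by move=> x _; rewrite derive1E derive_val.
Qed.

Lemma is_derive_sq (x : R) : is_derive x 1 (fun y : R => y * y) (2 * x).
Proof.
have h := is_deriveM (is_derive_id x (1:R)) (is_derive_id x (1:R)).
have -> : (fun y : R => y * y) = id * id by apply/funext.
apply: is_derive_eq h _.
by rewrite mulr_natl mulr2n /GRing.scale /= mulr1.
Qed.


Lemma is_derive_F2 (x : R) : is_derive x 1 (fun y : R => y * (2 - y)) (2 - 2 * x).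
Proof.
have h2 := is_deriveB (is_derive_cst (2 : R) x (1:R)) (is_derive_id x (1:R)).
have h := is_deriveM (is_derive_id x (1:R)) h2.
have -> : (fun y : R => y * (2 - y)) = id * (cst 2 - id) by apply/funext.
apply: is_derive_eq h _.
have -> : (cst 2 - id) x = 2 - x by []. 
rewrite /GRing.scale /= !mulr1 sub0r; lra.
Qed.

Lemma cont_lin (a b : R) : continuous (fun y : R => a + b * y).
Proof.
move=> x; apply: cvgD; first exact: cvg_cst.
by apply: cvgM; [exact: cvg_cst|exact: cvg_id].
Qed.

Definition tri (y : R) := 2 * Num.min y (1 - y).

Lemma tri_lip y1 y2 : `|tri y1 - tri y2| <= 2 * `|y1 - y2|.
Proof.
rewrite /tri.
have [hb|hb] := leP 0 (y1 - y2); [rewrite (ger0_norm hb)|rewrite (ltr0_norm hb)];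
have [h1|h1] := leP y1 (1 - y1); have [h2|h2] := leP y2 (1 - y2);
rewrite ler_norml; apply/andP; split; lra.
Qed.

Lemma tri_cont : {within `[0, 1], continuous tri}.
Proof.
apply: (@lip_within_cont _ _ 2) => // y1 y2 _ _; exact: tri_lip.
Qed.

Lemma Rint_tri : Rintegral leb [set` `[0, 1]] tri = 2^-1.
Proof.
have itri : leb.-integrable [set` `[0, 1]] (EFin \o tri).
  apply: continuous_compact_integrable; first exact: segment_compact.
  exact: tri_cont.
have E : [set` `[0, 1]] = [set` `[0, 2^-1]] `|` [set` `]2^-1, 1]] :> set R.
  apply/seteqP; split => z /=; rewrite !in_itv /=.
    move=> /andP[z0 z1]; have [h|h] := leP z (2^-1); [left|right];
    apply/andP; split => //; lra.
  by move=> [] /andP[? ?]; apply/andP; split; lra.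
have i1 : leb.-integrable [set` `[0, 2^-1]] (EFin \o tri).
  by apply: integrableS itri => //; rewrite E; exact: subsetUl.
have i2 : leb.-integrable [set` `]2^-1, 1]] (EFin \o tri).
  by apply: integrableS itri => //; rewrite E; exact: subsetUr.
rewrite E Rintegral_setU //; first last.
- apply/disj_setPS => z [/=]; rewrite !in_itv /= => /andP[_ h1] /andP[h2 _].
  by move: h1; rewrite leNgt h2.
- by rewrite -E.
rewrite Rintegral_itv_obnd_cbnd; last exact: i2.
rewrite (@eq_Rintegral _ _ _ leb ([set` `[0, 2^-1]] : set R) (fun y : R => 2 * y)); last first.
  move=> y; rewrite inE /= in_itv /= => /andP[? ?].
  have [h|h] := leP y (1 - y); lra.
rewrite (@eq_Rintegral _ _ _ leb ([set` `[2^-1, 1]] : set R) (fun y : R => 2 - 2 * y)); last first.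
  move=> y; rewrite inE /= in_itv /= => /andP[? ?].
  have [h|h] := leP y (1 - y); lra.
have c1 : continuous (fun y : R => 2 * y).
  by move=> x; apply: cvgM; [exact: cvg_cst|exact: cvg_id].
have c2 : continuous (fun y : R => 2 - 2 * y).
  by move=> x; apply: cvgB; [exact: cvg_cst|exact: c1].
have h0 : (0:R) < 2^-1 by lra.
have h1 : (2^-1:R) < 1 by lra.
have w1 : {within [set` `[0, 2^-1]], continuous (fun y : R => 2 * y)}.
  by apply: continuous_subspaceT.
have w2 : {within [set` `[2^-1, 1]], continuous (fun y : R => 2 - 2 * y)}.
  by apply: continuous_subspaceT.
rewrite (@ftc_helper (fun y => y * y) (fun y => 2 * y) 0 (2^-1) h0 is_derive_sq w1).
rewrite (@ftc_helper (fun y => y * (2 - y)) (fun y => 2 - 2 * y) (2^-1) 1 h1 is_derive_F2 w2).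
lra.
Qed.
End ftc.
Section kern.
Context (R : realType) (n : nat) (muA : probability (n.-tuple R) R).
Variables (mu : probability (n.-tuple R * R)%type R) (K : R.-pker (n.-tuple R) ~> R).
Hypotheses (hmu : is_copula_measure_xy mu) (hK : is_markov_kernel_of muA mu K).

Definition G (x : n.-tuple R) (y : R) : R := fine (K x [set` `[0, y]]).

Lemma K_le1 x (S : set R) : measurable S -> (K x S <= 1)%E.
Proof.
move=> mS; rewrite -(@prob_kernel _ _ _ _ _ K x); apply: le_measure => //; rewrite inE //.
Qed.

Lemma G_EFin x y : (G x y)%:E = K x [set` `[0, y]].
Proof.
rewrite /G fineK // ge0_fin_numE ?measure_ge0 //.
by apply: (le_lt_trans (K_le1 x _)) => //; rewrite ltey.
Qed.

Lemma G_ge0 x y : 0 <= G x y.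
Proof. by rewrite -lee_fin G_EFin measure_ge0. Qed.

Lemma G_le1 x y : G x y <= 1.
Proof. by rewrite -lee_fin G_EFin K_le1. Qed.

Lemma G_mono x y1 y2 : y1 <= y2 -> G x y1 <= G x y2.
Proof.
move=> y12; rewrite -lee_fin !G_EFin; apply: le_measure; rewrite ?inE //.
by move=> z /=; rewrite !in_itv /= => /andP[-> /le_trans ->].
Qed.

Lemma mG y : measurable_fun setT (G ^~ y).
Proof.
apply/measurable_EFinP.
rewrite (_ : _ \o _ = (K ^~ [set` `[0, y]])); first exact: measurable_kernel.
by apply/funext => x /=; rewrite G_EFin.
Qed.

Lemma mu_X y : 0 <= y -> mu (setT `*` [set` `[0, y]]) = (unif_cdf y)%:E.
Proof.
move=> y0.
have mN : measurable (setT `*` [set` `]-oo, 0[] : set (n.-tuple R * R)).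
  by apply: measurableX.
have mA : measurable (setT `*` [set` `[0, y]] : set (n.-tuple R * R)).
  by apply: measurableX.
have N0 : mu (setT `*` [set` `]-oo, 0[]) = 0.
  apply/eqP; rewrite eq_le measure_ge0 andbT.
  have <- : mu [set z | z.2 <= 0] = 0.
    by rewrite hmu.2 /unif_cdf maxxx min_l.
  apply: le_measure; rewrite ?inE //.
    rewrite (_ : [set z | z.2 <= 0] = setT `*` [set` `]-oo, 0]]).
      by apply: measurableX.
    by apply/seteqP; split => z /=; rewrite ?in_itv /=; tauto.
  by move=> z /= [_]; rewrite in_itv /= => /ltW.
have : mu [set z | z.2 <= y] = (unif_cdf y)%:E by rewrite hmu.2.
rewrite (_ : [set z | z.2 <= y] = (setT `*` [set` `[0, y]]) `|` (setT `*` [set` `]-oo, 0[])).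
  rewrite measureU //; first by move=> <-; rewrite [X in _ = _ + X]N0 adde0.
  apply/seteqP; split => z //= [[_]]; rewrite !in_itv /= => /andP[h _] [_].
  by rewrite ltNge h.
apply/seteqP; split => z /=.
  rewrite !in_itv /= => zy; have [h|h] := leP 0 z.2; first by left; split => //; rewrite in_itv /= h zy.
  by right; split => //; rewrite in_itv /=.
by rewrite !in_itv /= => -[[_ /andP[_ ->]]|[_ /ltW /le_trans]] //; apply.
Qed.

Lemma intG y : muA.-integrable setT (EFin \o G ^~ y).
Proof.
apply: measurable_bounded_integrable => //.
- by apply: (le_lt_trans (probability_le1 muA measurableT)); rewrite ltey.
- exact: mG.
- exists 1; split => // r r1 x _ /=; rewrite ger0_norm ?G_ge0 //.
  by apply: le_trans (ltW r1); exact: G_le1.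
Qed.

Lemma RintG y : 0 <= y <= 1 -> Rintegral muA setT (G ^~ y) = y.
Proof.
move=> /andP[y0 y1].
rewrite /Rintegral.
have -> : (\int[muA]_(x in setT) (G x y)%:E = mu (setT `*` [set` `[0, y]%R]))%E.
  rewrite hK //; apply: eq_integral => x _; exact: G_EFin.
by rewrite mu_X // /unif_cdf /= max_l // min_l.
Qed.
End kern.


Section two.
Context (R : realType) (n : nat) (muA : probability (n.-tuple R) R).
Variables (mu1 mu2 : probability (n.-tuple R * R)%type R)
  (K1 K2 : R.-pker (n.-tuple R) ~> R).
Hypotheses (hmu1 : is_copula_measure_xy mu1) (hK1 : is_markov_kernel_of muA mu1 K1).
Hypotheses (hmu2 : is_copula_measure_xy mu2) (hK2 : is_markov_kernel_of muA mu2 K2).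
Variables (p : R) (hp : 1 <= p).

Lemma intB (f : n.-tuple R -> R) (M : R) : measurable_fun setT f ->
  (forall x, `|f x| <= M) -> muA.-integrable setT (EFin \o f).
Proof.
move=> mf hM; apply: measurable_bounded_integrable => //.
- by apply: (le_lt_trans (probability_le1 muA measurableT)); rewrite ltey.
- exists M; split; first exact: num_real.
  move=> r r1 x _ /=; exact: le_trans (hM x) (ltW r1).
Qed.

Definition H y x := `|G K1 x y - G K2 x y| `^ p.

Lemma PhiE y : Phi muA K1 K2 p y = Rintegral muA setT (H y).
Proof. by []. Qed.

Lemma D_01 x y : `|G K1 x y - G K2 x y| <= 1.
Proof.
have := G_ge0 K1 x y; have := G_le1 K1 x y.
have := G_ge0 K2 x y; have := G_le1 K2 x y.
move=> *; rewrite ler_norml; apply/andP; split; lra.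
Qed.

Lemma mH y : measurable_fun setT (H y).
Proof.
apply: (measurableT_comp (measurable_powR _)).
apply: measurableT_comp => //.
apply: measurable_funB; exact: mG.
Qed.

Lemma H_ge0 y x : 0 <= H y x.
Proof. exact: powR_ge0. Qed.

Lemma H_le y x : H y x <= `|G K1 x y - G K2 x y|.
Proof. by apply: powR_le_id => //; rewrite normr_ge0 D_01. Qed.

Lemma intH y : muA.-integrable setT (EFin \o H y).
Proof.
apply: (@intB _ 1); first exact: mH.
move=> x; rewrite ger0_norm ?H_ge0 //; apply: le_trans (H_le y x) (D_01 x y).
Qed.

Lemma intG1 y : muA.-integrable setT (EFin \o G K1 ^~ y).
Proof. exact: intG. Qed.
Lemma intG2 y : muA.-integrable setT (EFin \o G K2 ^~ y).
Proof. exact: intG. Qed.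
Lemma intC (c : R) : muA.-integrable setT (EFin \o (fun _ : n.-tuple R => c)).
Proof. apply: (@intB _ `|c|) => //. Qed.

Lemma Phi_ge0 y : 0 <= Phi muA K1 K2 p y.
Proof. by apply: Rintegral_ge0 => x _; exact: H_ge0. Qed.

Lemma RintC (c : R) : Rintegral muA setT (fun _ => c) = c.
Proof.
rewrite Rintegral_cst //.
transitivity (c * fine (1%E : \bar R)); last by rewrite mulr1.
by congr (_ * fine _); exact: probability_setT.
Qed.

Lemma Gb (K : R.-pker (n.-tuple R) ~> R) x y : 0 <= G K x y <= 1.
Proof. by rewrite G_ge0 G_le1. Qed.

Ltac mfun := repeat first [ apply: measurable_funD | apply: measurable_funB
  | apply: measurable_funM | apply: measurable_funN | exact: mG | exact: measurable_cst | exact: mH ].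

Lemma Phi_le y : 0 <= y <= 1 -> Phi muA K1 K2 p y <= 2 * Num.min y (1 - y).
Proof.
move=> hy.
have h1 : Phi muA K1 K2 p y <= Rintegral muA setT (fun x => G K1 x y + G K2 x y).
  rewrite PhiE; apply: le_Rintegral => //; first exact: intH.
    apply: (@intB _ 2); first by mfun.
    move=> x; move: (Gb K1 x y) (Gb K2 x y) => /andP[? ?] /andP[? ?].
    rewrite ler_norml; apply/andP; split; lra.
  move=> x _; apply: le_trans (H_le y x) _.
  move: (Gb K1 x y) (Gb K2 x y) => /andP[? ?] /andP[? ?].
  rewrite ler_norml; apply/andP; split; lra.
have h2 : Phi muA K1 K2 p y <=
    Rintegral muA setT (fun x => (1 - G K1 x y) + (1 - G K2 x y)).
  rewrite PhiE; apply: le_Rintegral => //; first exact: intH.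
    apply: (@intB _ 2); first by mfun.
    move=> x; move: (Gb K1 x y) (Gb K2 x y) => /andP[? ?] /andP[? ?].
    rewrite ler_norml; apply/andP; split; lra.
  move=> x _; apply: le_trans (H_le y x) _.
  move: (Gb K1 x y) (Gb K2 x y) => /andP[? ?] /andP[? ?].
  rewrite ler_norml; apply/andP; split; lra.
rewrite RintegralD // ?(RintG hmu1 hK1) ?(RintG hmu2 hK2) // in h1; try exact: intG.
rewrite RintegralD // ?RintegralB // ?RintC ?(RintG hmu1 hK1) ?(RintG hmu2 hK2) // in h2;
  try exact: intG; try exact: intC;
  try (apply: (@intB _ 1); first by mfun);
  try (move=> x; move: (Gb K1 x y) (Gb K2 x y) => /andP[? ?] /andP[? ?];
    rewrite ler_norml; apply/andP; split; lra).
have [yl|yl] := leP y (1 - y).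
  lra.
lra.
Qed.

Lemma Phi_lip_le y1 y2 : 0 <= y1 -> y1 <= y2 -> y2 <= 1 ->
  `|Phi muA K1 K2 p y1 - Phi muA K1 K2 p y2| <= 2 * p * `|y1 - y2|.
Proof.
move=> y10 y12 y21.
have p0 : 0 <= p by rewrite (le_trans _ hp).
rewrite !PhiE -RintegralB //; try exact: intH.
apply: le_trans (le_normr_Rintegral _ _) _ => //.
  apply: (@intB _ 1); first by mfun.
  move=> x; move: (H_ge0 y1 x) (H_ge0 y2 x).
  move: (le_trans (H_le y1 x) (D_01 x y1)) (le_trans (H_le y2 x) (D_01 x y2)).
  rewrite /H => ? ? ? ?.
  rewrite ler_norml; apply/andP; split; lra.
apply: (@le_trans _ _ (Rintegral muA setT (fun x =>
  p * ((G K1 x y2 - G K1 x y1) + (G K2 x y2 - G K2 x y1))))).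
  apply: le_Rintegral => //.
  - apply: (@intB _ 1); first by apply: measurableT_comp => //; mfun.
    move=> x; rewrite normr_id; move: (H_ge0 y1 x) (H_ge0 y2 x).
    move: (le_trans (H_le y1 x) (D_01 x y1)) (le_trans (H_le y2 x) (D_01 x y2)).
    rewrite /H => ? ? ? ?.
    rewrite ler_norml; apply/andP; split; lra.
  - apply: (@intB _ (p * 2)); first by mfun.
    move=> x; move: (Gb K1 x y1) (Gb K2 x y1) => /andP[? ?] /andP[? ?].
    move: (Gb K1 x y2) (Gb K2 x y2) => /andP[? ?] /andP[? ?].
    move: (G_mono K1 x y12) (G_mono K2 x y12) => ? ?.
    rewrite normrM ger0_norm // ler_wpM2l // ler_norml; apply/andP; split; lra.
  move=> x _; rewrite /H.
  apply: le_trans (powR_lip _ _ hp) _; try by rewrite normr_ge0 D_01.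
  rewrite ler_wpM2l //; apply: le_trans (ler_dist_dist _ _) _.
  move: (G_mono K1 x y12) (G_mono K2 x y12) => ? ?.
  rewrite ler_norml; apply/andP; split; lra.
rewrite RintegralZl //; last first.
  apply: (@intB _ 2); first by mfun.
  move=> x; move: (Gb K1 x y1) (Gb K2 x y1) => /andP[? ?] /andP[? ?].
  move: (Gb K1 x y2) (Gb K2 x y2) => /andP[? ?] /andP[? ?].
  rewrite ler_norml; apply/andP; split; lra.
rewrite RintegralD //; first last.
- apply: (@intB _ 1); first by mfun.
  move=> x; move: (Gb K2 x y1) (Gb K2 x y2) => /andP[? ?] /andP[? ?].
  rewrite ler_norml; apply/andP; split; lra.
- apply: (@intB _ 1); first by mfun.
  move=> x; move: (Gb K1 x y1) (Gb K1 x y2) => /andP[? ?] /andP[? ?].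
  rewrite ler_norml; apply/andP; split; lra.
rewrite !RintegralB //; try exact: intG.
rewrite (RintG hmu1 hK1) ?(RintG hmu2 hK2) ?(RintG hmu1 hK1) ?(RintG hmu2 hK2);
  try (apply/andP; split; lra).
rewrite distrC ger0_norm ?subr_ge0 //; lra.
Qed.

Lemma Phi_lip y1 y2 : y1 \in `[0, 1] -> y2 \in `[0, 1] ->
  `|Phi muA K1 K2 p y1 - Phi muA K1 K2 p y2| <= 2 * p * `|y1 - y2|.
Proof.
rewrite !in_itv /= => /andP[? ?] /andP[? ?].
have [y12|y12] := leP y1 y2; first exact: Phi_lip_le.
by rewrite distrC [`|y1 - y2|]distrC; apply: Phi_lip_le => //; exact: ltW.
Qed.


Lemma Phi_cont : {within `[0, 1], continuous (Phi muA K1 K2 p)}.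
Proof.
apply: (@lip_within_cont _ _ (2 * p)); last exact: Phi_lip.
by rewrite mulr_ge0 // (le_trans _ hp).
Qed.

Lemma Phi_tri y : y \in `[0, 1] -> Phi muA K1 K2 p y <= @tri R y.
Proof. by rewrite in_itv /= => hy; exact: Phi_le. Qed.

Lemma Dist_le : Dist muA K1 K2 p <= 2 `^ (- p^-1).
Proof.
have p0 : 0 < p by rewrite (lt_le_trans _ hp).
rewrite /Dist.
have iP : (@lebesgue_measure R).-integrable [set` `[0, 1]] (EFin \o Phi muA K1 K2 p).
  apply: continuous_compact_integrable; first exact: segment_compact.
  exact: Phi_cont.
have iT : (@lebesgue_measure R).-integrable [set` `[0, 1]] (EFin \o @tri R).
  apply: continuous_compact_integrable; first exact: segment_compact.
  exact: tri_cont.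
have le : Rintegral (@lebesgue_measure R) [set` `[0, 1]] (Phi muA K1 K2 p) <=
    Rintegral (@lebesgue_measure R) [set` `[0, 1]] (@tri R).
  apply: le_Rintegral => // y hy; apply: Phi_tri; exact: hy.
rewrite Rint_tri in le.
have ge0 : 0 <= Rintegral (@lebesgue_measure R) [set` `[0, 1]] (Phi muA K1 K2 p).
  by apply: Rintegral_ge0 => y _; exact: Phi_ge0.
apply: le_trans (ge0_ler_powR _ _ _ le) _.
- by rewrite invr_ge0 ltW.
- by rewrite nnegrE.
- by rewrite nnegrE.
have -> : (2^-1 : R) = 2 `^ (-1) by rewrite powR_inv1.
by rewrite -powRrM mulN1r.
Qed.

End two.


Section dirac_part.
Context (R : realType) (n : nat) (muA : probability (n.-tuple R) R).
Variables (f : n.-tuple R -> R) (mf : measurable_fun setT f).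

Definition gpair (x : n.-tuple R) : (n.-tuple R * R)%type := (x, f x).

Lemma mgpair : measurable_fun setT gpair.
Proof. exact: measurable_fun_pair. Qed.

HB.instance Definition _ := isMeasurableFun.Build _ _ _ _ gpair mgpair.

Definition mud : probability (n.-tuple R * R)%type R := distribution muA gpair.
Definition Kd : R.-pker (n.-tuple R) ~> R := kdirac mf.

Lemma mudE S : mud S = muA (gpair @^-1` S).
Proof. by []. Qed.

Lemma has_marginal_d : has_marginal muA mud.
Proof.
move=> B mB; rewrite mudE; congr (muA _).
by apply/seteqP; split => x /=; [case|].
Qed.

Lemma markov_d : is_markov_kernel_of muA mud Kd.
Proof.
move=> B F mB mF; rewrite mudE.
have mfF : measurable (f @^-1` F) by rewrite -[X in measurable X]setTI; exact: mf.
transitivity (\int[muA]_(x in B) (\1_(f @^-1` F) x)%:E)%E; last first.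
  by apply: eq_integral => x _; rewrite /Kd /kdirac /= diracE indicE.
by rewrite integral_indic // setIC.
Qed.

Lemma copula_d : is_copula_measure muA ->
  (forall t, muA [set x | f x <= t] = (unif_cdf t)%:E) -> is_copula_measure_xy mud.
Proof.
move=> hA hf; split.
- by move=> i t; rewrite mudE; exact: hA.
- by move=> t; rewrite mudE; exact: hf.
Qed.

Lemma Gd x y : G Kd x y = \1_[set` `[0, y]] (f x).
Proof. by rewrite /G /Kd /kdirac /=. Qed.

End dirac_part.


Section sharp.
Context (R : realType) (n : nat) (i0 : 'I_n) (muA : probability (n.-tuple R) R).
Hypothesis hA : is_copula_measure muA.

Let f1 (x : n.-tuple R) : R := tnth x i0.
Let f2 (x : n.-tuple R) : R := 1 - tnth x i0.

Lemma mf1 : measurable_fun setT f1.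
Proof. exact: measurable_tnth. Qed.

Lemma mf2 : measurable_fun setT f2.
Proof. by apply: measurable_funB => //; exact: measurable_tnth. Qed.

Lemma mpre (S : set R) : measurable S ->
  measurable [set x : n.-tuple R | S (tnth x i0)].
Proof.
move=> mS; have := measurable_tnth i0 measurableT mS.
by rewrite setTI.
Qed.

Lemma U_cases (t : R) : (t <= 0 /\ unif_cdf t = 0) \/
  ((0 <= t <= 1) /\ unif_cdf t = t) \/ (1 <= t /\ unif_cdf t = 1).
Proof.
rewrite /unif_cdf; have [h|h] := leP t 0.
  by left; split => //; rewrite min_l.
have [h'|h'] := leP t 1.
  by right; left; split; [rewrite ltW|].
by right; right; split; [rewrite ltW|].
Qed.

Lemma U_lip (s e : R) : 0 <= e -> unif_cdf s - e <= unif_cdf (s - e).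
Proof.
move=> e0.
case: (U_cases s) => [[h ->]|[[h ->]|[h ->]]];
case: (U_cases (s - e)) => [[h' ->]|[[h' ->]|[h' ->]]]; lra.
Qed.

Lemma Llt s : muA [set x | tnth x i0 < s] = (unif_cdf s)%:E.
Proof.
have m1 : measurable [set x : n.-tuple R | tnth x i0 < s].
  exact: (mpre (S := [set r | r < s])) (measurable_itv `]-oo, s[).
have le1 : (muA [set x | (tnth x i0 < s)%R] <= (unif_cdf s)%:E)%E.
  rewrite -(hA i0); apply: le_measure; rewrite ?inE //.
    exact: (mpre (S := [set r | r <= s])) (measurable_itv `]-oo, s]).
  by move=> x /= /ltW.
have fin : muA [set x | tnth x i0 < s] \is a fin_num.
  by rewrite ge0_fin_numE ?measure_ge0 // (le_lt_trans le1) // ltey.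
rewrite -(fineK fin); congr EFin; apply/eqP; rewrite eq_le.
rewrite -lee_fin fineK // le1 /=.
apply/ler_addgt0Pr => e e0.
rewrite -lerBlDr; apply: (le_trans (U_lip s (ltW e0))).
rewrite -lee_fin fineK // -(hA i0); apply: le_measure; rewrite ?inE //.
  exact: (mpre (S := [set r | r <= s - e])) (measurable_itv `]-oo, (s - e)]).
by move=> x /= h; apply: (le_lt_trans h); rewrite ltrBlDr ltrDl.
Qed.

Lemma Lint a b : a <= b ->
  muA [set x | a <= tnth x i0 <= b] = (unif_cdf b - unif_cdf a)%:E.
Proof.
move=> ab.
have mA : measurable [set x : n.-tuple R | a <= tnth x i0 <= b].
  exact: (mpre (S := [set r | a <= r <= b])) (measurable_itv `[a, b]).
have mB : measurable [set x : n.-tuple R | tnth x i0 < a].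
  exact: (mpre (S := [set r | r < a])) (measurable_itv `]-oo, a[).
have : muA [set x | tnth x i0 <= b] = (unif_cdf b)%:E by exact: hA.
rewrite (_ : [set x | tnth x i0 <= b] =
  [set x | a <= tnth x i0 <= b] `|` [set x | tnth x i0 < a]).
  rewrite measureU //; last first.
    apply/seteqP; split => x //= [/andP[h _]]; rewrite ltNge h //.
  move=> h; rewrite EFinB -h -(Llt a) addeK //.
  rewrite ge0_fin_numE ?measure_ge0 //.
  by apply: (le_lt_trans (probability_le1 muA mB)); rewrite ltey.
apply/seteqP; split => x /=.
  by move=> xb; have [h|h] := leP a (tnth x i0); [left; apply/andP|right].
by move=> [/andP[_ ->]|h] //; apply: ltW (lt_le_trans h ab).
Qed.

Lemma hf2 t : muA [set x | f2 x <= t] = (unif_cdf t)%:E.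
Proof.
rewrite (_ : [set x | f2 x <= t] = ~` [set x | tnth x i0 < 1 - t]).
  rewrite probability_setC; last first.
    exact: (mpre (S := [set r | r < 1 - t])) (measurable_itv `]-oo, (1 - t)[).
  rewrite Llt -EFinB; congr EFin.
  case: (U_cases t) => [[h ->]|[[h ->]|[h ->]]];
  case: (U_cases (1 - t)) => [[h' ->]|[[h' ->]|[h' ->]]]; lra.
apply/seteqP; split => x /=; rewrite /f2.
  by move=> h; apply/negP; rewrite -leNgt; lra.
by move/negP; rewrite -leNgt => h; lra.
Qed.

Lemma mem_setb (T : Type) (P : T -> bool) x : (x \in [set y | P y]) = P x.
Proof. by apply/idP/idP => [/set_mem|h] //; apply/mem_set. Qed.

Lemma Rint_indic (S : set (n.-tuple R)) : measurable S ->
  Rintegral muA setT (\1_S) = fine (muA S).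
Proof. by move=> mS; rewrite /Rintegral integral_indic // setIT. Qed.

Lemma U_id (t : R) : 0 <= t <= 1 -> unif_cdf t = t.
Proof.
move=> /andP[? ?].
by case: (U_cases t) => [[h ->]|[[h ->]|[h ->]]] //; lra.
Qed.

Variables (p : R) (hp : 1 <= p).

Lemma Phi_sharp y : 0 <= y <= 1 -> Phi muA (Kd mf1) (Kd mf2) p y = @tri R y.
Proof.
move=> /andP[y0 y1].
have p0 : p != 0 by rewrite gt_eqF // (lt_le_trans _ hp).
pose A := [set x : n.-tuple R | 0 <= tnth x i0 <= y].
pose B := [set x : n.-tuple R | 1 - y <= tnth x i0 <= 1].
pose C := [set x : n.-tuple R | 1 - y <= tnth x i0 <= y].
have mA : measurable A by exact: (mpre (S := [set r | 0 <= r <= y])) (measurable_itv `[0, y]).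
have mB : measurable B by exact: (mpre (S := [set r | 1 - y <= r <= 1])) (measurable_itv `[1 - y, 1]).
have mC : measurable C by exact: (mpre (S := [set r | 1 - y <= r <= y])) (measurable_itv `[1 - y, y]).
have E : Phi muA (Kd mf1) (Kd mf2) p y =
    Rintegral muA setT (fun x => \1_A x + \1_B x - 2 * \1_C x).
  apply: eq_Rintegral => x _.
  rewrite -/(G (Kd mf1) x y) -/(G (Kd mf2) x y) !Gd !indicE /f1 /f2.
  rewrite !mem_setb !in_itv /=.
  have -> : (1 - y <= tnth x i0 <= 1) = (0 <= 1 - tnth x i0 <= y).
    by apply/idP/idP => /andP[? ?]; apply/andP; split; lra.
  have -> : (1 - y <= tnth x i0 <= y) =
      (0 <= tnth x i0 <= y) && (0 <= 1 - tnth x i0 <= y).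
    apply/idP/idP.
      by move=> /andP[? ?]; apply/andP; split; apply/andP; split; lra.
    by move=> /andP[/andP[? ?] /andP[? ?]]; apply/andP; split; lra.
  case: (0 <= tnth x i0 <= y); case: (0 <= 1 - tnth x i0 <= y) => /=.
  - by rewrite subrr normr0 powR0 //; lra.
  - by rewrite subr0 normr1 powR1; lra.
  - by rewrite sub0r normrN normr1 powR1; lra.
  - by rewrite subrr normr0 powR0 //; lra.
have iI (S : set (n.-tuple R)) : measurable S ->
    muA.-integrable setT (EFin \o (\1_S : n.-tuple R -> R)).
  move=> mS; apply: (@intB _ _ muA _ 1); first exact: measurable_indic.
  by move=> x; rewrite indicE; case: (x \in S); rewrite ?normr1 ?normr0.
have iC2 : muA.-integrable setT (EFin \o (fun x => 2 * (\1_C x : R))).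
  apply: (@intB _ _ muA _ 2); first by apply: measurable_funM => //; exact: measurable_indic.
  by move=> x; rewrite indicE; case: (x \in C); rewrite ?mulr1 ?mulr0 ?normr0 ?ger0_norm.
rewrite E RintegralB //; last first.
  apply: (@intB _ _ muA _ 2).
    by apply: measurable_funD; exact: measurable_indic.
  move=> x; rewrite !indicE; case: (x \in A); case: (x \in B) => /=;
  rewrite ?addr0 ?add0r ?normr1 ?normr0 ?ger0_norm //; lra.
rewrite RintegralD ?iI // (RintegralZl (f := \1_C) 2 measurableT (iI _ mC)) !Rint_indic //.
have hAy : muA A = y%:E.
  by rewrite /A Lint // U_id ?y0 ?y1 // U_id ?lexx ?ler01 // subr0.
have hBy : muA B = y%:E.
  rewrite /B Lint; last lra.
  by rewrite U_id ?lexx ?ler01 // U_id; [congr EFin; lra|apply/andP; split; lra].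
rewrite hAy hBy /= /tri.
have [h|h] := leP y (1 - y).
  have -> : muA C = 0%E.
    have [h'|h'] := eqVneq y (2^-1).
      rewrite /C Lint; last lra.
      by rewrite U_id ?U_id; [congr EFin; lra|apply/andP; split; lra|apply/andP; split; lra].
    rewrite (_ : C = set0) ?measure0 //.
    apply/seteqP; split => x //=; move/andP => [? ?].
    have : y = 2^-1 by lra.
    by move/eqP; rewrite (negbTE h').
  rewrite /= mulr0 subr0; lra.
rewrite /C Lint; last lra.
rewrite U_id ?U_id /=; [lra|apply/andP; split; lra|apply/andP; split; lra].
Qed.

Lemma Dist_sharp : Dist muA (Kd mf1) (Kd mf2) p = 2 `^ (- p^-1).
Proof.
rewrite /Dist.
have -> : Rintegral (@lebesgue_measure R) [set` `[0, 1]] (Phi muA (Kd mf1) (Kd mf2) p)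
    = Rintegral (@lebesgue_measure R) [set` `[0, 1]] (@tri R).
  by apply: eq_Rintegral => y; rewrite inE /= in_itv /= => hy; exact: Phi_sharp.
rewrite Rint_tri.
have -> : (2^-1 : R) = 2 `^ (-1) by rewrite powR_inv1.
by rewrite -powRrM mulN1r.
Qed.

End sharp.


Unset Implicit Arguments.

Theorem lemma17 (R : realType) (d : nat) (hd : (2 <= d)%N)
  (muA : probability (d.-1.-tuple R) R) (hA : is_copula_measure muA)
  (p : R) (hp : 1 <= p) :
  (forall (mu1 mu2 : probability (d.-1.-tuple R * R)%type R)
          (K1 K2 : R.-pker (d.-1.-tuple R) ~> R),
      is_copula_measure_xy mu1 -> is_copula_measure_xy mu2 ->
      has_marginal muA mu1 -> has_marginal muA mu2 ->
      is_markov_kernel_of muA mu1 K1 -> is_markov_kernel_of muA mu2 K2 ->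
      [/\ (Phi muA K1 K2 p 0 = 0 /\ Phi muA K1 K2 p 1 = 0),
          ({within `[0, 1], continuous (Phi muA K1 K2 p)} /\
          (p = 1 -> forall y1 y2 : R, y1 \in `[0, 1] -> y2 \in `[0, 1] ->
             `|Phi muA K1 K2 p y1 - Phi muA K1 K2 p y2| <= 2 * `|y1 - y2|)),
          (forall y : R, y \in `[0, 1] ->
             Phi muA K1 K2 p y <= 2 * Num.min y (1 - y)) &
          Dist muA K1 K2 p <= 2 `^ (- p^-1)]) /\
  (exists (mu1 mu2 : probability (d.-1.-tuple R * R)%type R)
          (K1 K2 : R.-pker (d.-1.-tuple R) ~> R),
      [/\ is_copula_measure_xy mu1 /\ is_copula_measure_xy mu2,
          has_marginal muA mu1 /\ has_marginal muA mu2,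
          is_markov_kernel_of muA mu1 K1 /\ is_markov_kernel_of muA mu2 K2 &
          forall y : R, y \in `[0, 1] ->
            Phi muA K1 K2 p y = 2 * Num.min y (1 - y)]) /\
  (exists (mu1 mu2 : probability (d.-1.-tuple R * R)%type R)
          (K1 K2 : R.-pker (d.-1.-tuple R) ~> R),
      [/\ is_copula_measure_xy mu1 /\ is_copula_measure_xy mu2,
          has_marginal muA mu1 /\ has_marginal muA mu2,
          is_markov_kernel_of muA mu1 K1 /\ is_markov_kernel_of muA mu2 K2 &
          Dist muA K1 K2 p = 2 `^ (- p^-1)]).
Proof.
have n0 : (0 < d.-1)%N by move: hd; clear; case: d => [|[|]].
pose i0 : 'I_(d.-1) := Ordinal n0.
split.
  move=> mu1 mu2 K1 K2 hmu1 hmu2 _ _ hK1 hK2.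
  have hle := Phi_le hmu1 hK1 hmu2 hK2 hp.
  have hge := Phi_ge0 muA K1 K2 p.
  split.
  - split; apply/eqP; rewrite eq_le hge andbT.
      by have := hle 0; rewrite lexx ler01 subr0 => /(_ isT); rewrite min_l ?ler01 // mulr0.
    by have := hle 1; rewrite lexx ler01 subrr => /(_ isT); rewrite min_r ?ler01 // mulr0.
  - split; first exact (Phi_cont hmu1 hK1 hmu2 hK2 hp).
    move=> p1 y1 y2 h1 h2; have := Phi_lip hmu1 hK1 hmu2 hK2 hp h1 h2.
    by rewrite p1 mulr1.
  - by move=> y; rewrite in_itv /= => hy; exact: hle.
  - exact (Dist_le hmu1 hK1 hmu2 hK2 hp).
have c1 := copula_d (mf1 (R := R) i0) hA (hA i0).
have c2 := copula_d (mf2 (R := R) i0) hA (hf2 i0 hA).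
split.
  exists (mud muA (mf1 i0)), (mud muA (mf2 i0)), (Kd (mf1 i0)), (Kd (mf2 i0)).
  split => //.
  - by split; exact: has_marginal_d.
  - by split; exact: markov_d.
  - by move=> y; rewrite in_itv /= => hy; exact: Phi_sharp.
exists (mud muA (mf1 i0)), (mud muA (mf2 i0)), (Kd (mf1 i0)), (Kd (mf2 i0)).
split => //.
- by split; exact: has_marginal_d.
- by split; exact: markov_d.
- exact: Dist_sharp.
Qed.
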